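(* Let $\theta(q,x):=\sum_{j=0}^{\infty}q^{j(j+1)/2}x^j$, $\Theta^*(q,x):=\sum_{j=-\infty}^{\infty}q^{j(j+1)/2}x^j$ and $G(q,x):=\sum_{j=-\infty}^{-1}q^{j(j+1)/2}x^j$, so that $\theta=\Theta^*-G$. For $q\in[0.5,1)$ and $x$ on the arc $C_2:=\{x\in\mathbb{C}:\ |x|=3,\ \arg x\in[3\pi/4,\pi]\}$, one has $|G(q,x)|>|\Theta^*(q,x)|$, hence $|\theta(q,x)|>0$. *)

(* Defs.v *)
From Stdlib Require Import Reals.
From Coquelicot Require Import Coquelicot.
Open Scope R_scope.

Definition CSeries (a : nat -> C) : C :=
  (Series (fun n => Re (a n)), Series (fun n => Im (a n))).

Definition Cpown (x : C) (n : nat) : C := @pow_n C_Ring x n.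

Definition qtri (q : R) (j : nat) : R := q ^ (Nat.div (j * (j + 1)) 2).

Definition theta (q : R) (x : C) : C :=
  CSeries (fun j => Cmult (RtoC (qtri q j)) (Cpown x j)).

(* G(q,x) = sum_{j=-oo}^{-1} q^{j(j+1)/2} x^j ; with j = -(k+1), k >= 0,
   j(j+1)/2 = (k+1)k/2 = qtri exponent at k. *)
Definition Gfun (q : R) (x : C) : C :=
  CSeries (fun k => Cmult (RtoC (qtri q k)) (Cpown (Cinv x) (S k))).

Definition ThetaStar (q : R) (x : C) : C := Cplus (theta q x) (Gfun q x).

Definition arc_pt (phi : R) : C := (3 * cos phi, 3 * sin phi).

(* Main.v *)
Require Import Defs.
From Stdlib Require Import Reals Lra Lia List.
From Coquelicot Require Import Coquelicot.
From Stdlib Require Import List. Import ListNotations.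
Open Scope R_scope.

Fixpoint csum (f : nat -> C) (n : nat) : C :=
  match n with O => RtoC 0 | S k => Cplus (csum f k) (f k) end.
Fixpoint cprod (f : nat -> C) (n : nat) : C :=
  match n with O => RtoC 1 | S k => Cmult (cprod f k) (f k) end.
Fixpoint rsum (f : nat -> R) (n : nat) : R :=
  match n with O => 0 | S k => rsum f k + f k end.
Fixpoint rprod (f : nat -> R) (n : nat) : R :=
  match n with O => 1 | S k => rprod f k * f k end.

Lemma csum_ext f g n : (forall i, (i < n)%nat -> f i = g i) -> csum f n = csum g n.
Proof. induction n; simpl; intros H; auto. rewrite IHn by (intros; apply H; lia).
  rewrite H by lia. auto. Qed.
Lemma cprod_ext f g n : (forall i, (i < n)%nat -> f i = g i) -> cprod f n = cprod g n.
Proof. induction n; simpl; intros H; auto. rewrite IHn by (intros; apply H; lia).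
  rewrite H by lia. auto. Qed.
Lemma rsum_ext f g n : (forall i, (i < n)%nat -> f i = g i) -> rsum f n = rsum g n.
Proof. induction n; simpl; intros H; auto. rewrite IHn by (intros; apply H; lia).
  rewrite H by lia. auto. Qed.
Lemma rprod_ext f g n : (forall i, (i < n)%nat -> f i = g i) -> rprod f n = rprod g n.
Proof. induction n; simpl; intros H; auto. rewrite IHn by (intros; apply H; lia).
  rewrite H by lia. auto. Qed.

Lemma csum_add f g n : csum (fun i => Cplus (f i) (g i)) n = Cplus (csum f n) (csum g n).
Proof. induction n; simpl. ring. rewrite IHn; ring. Qed.
Lemma csum_scal c f n : csum (fun i => Cmult c (f i)) n = Cmult c (csum f n).
Proof. induction n; simpl. ring. rewrite IHn; ring. Qed.
Lemma csum_opp f n : csum (fun i => Copp (f i)) n = Copp (csum f n).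
Proof. induction n; simpl. ring. rewrite IHn; ring. Qed.
Lemma csum_split f a b : csum f (a + b) = Cplus (csum f a) (csum (fun i => f (a + i)%nat) b).
Proof. induction b; simpl. rewrite Nat.add_0_r; ring.
  rewrite Nat.add_succ_r; simpl; rewrite IHb; ring. Qed.
Lemma csum_first f n : csum f (S n) = Cplus (f O) (csum (fun i => f (S i)) n).
Proof. change (S n) with (1 + n)%nat. rewrite csum_split. simpl. f_equal. ring. Qed.
Lemma csum_rev f n : csum f n = csum (fun i => f (n - 1 - i)%nat) n.
Proof. induction n. reflexivity.
  transitivity (Cplus (csum f n) (f n)). reflexivity.
  rewrite (csum_first (fun i => f (S n - 1 - i)%nat)). rewrite IHn.
  replace (S n - 1 - 0)%nat with n by lia.
  rewrite (csum_ext (fun i => f (S n - 1 - S i)%nat) (fun i => f (n - 1 - i)%nat)).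
  ring. intros; f_equal; lia. Qed.

Lemma cprod_mult f g n : cprod (fun i => Cmult (f i) (g i)) n = Cmult (cprod f n) (cprod g n).
Proof. induction n; simpl. ring. rewrite IHn; ring. Qed.
Lemma cprod_split f a b : cprod f (a + b) = Cmult (cprod f a) (cprod (fun i => f (a + i)%nat) b).
Proof. induction b; simpl. rewrite Nat.add_0_r; ring.
  rewrite Nat.add_succ_r; simpl; rewrite IHb; ring. Qed.
Lemma cprod_first f n : cprod f (S n) = Cmult (f O) (cprod (fun i => f (S i)) n).
Proof. change (S n) with (1 + n)%nat. rewrite cprod_split. simpl. f_equal. ring. Qed.
Lemma cprod_rev f n : cprod f n = cprod (fun i => f (n - 1 - i)%nat) n.
Proof. induction n. reflexivity.
  transitivity (Cmult (cprod f n) (f n)). reflexivity.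
  rewrite (cprod_first (fun i => f (S n - 1 - i)%nat)). rewrite IHn.
  replace (S n - 1 - 0)%nat with n by lia.
  rewrite (cprod_ext (fun i => f (S n - 1 - S i)%nat) (fun i => f (n - 1 - i)%nat)).
  ring. intros; f_equal; lia. Qed.

Lemma Cpown_0 x : @eq C (Cpown x 0) (RtoC 1). Proof. reflexivity. Qed.
Lemma Cpown_S x n : @eq C (Cpown x (S n)) (Cmult x (Cpown x n)). Proof. reflexivity. Qed.
Lemma Cpown_add x a b : @eq C (Cpown x (a + b)) (Cmult (Cpown x a) (Cpown x b)).
Proof. induction a; cbn [Nat.add]. rewrite Cpown_0; ring. rewrite !Cpown_S, IHa; ring. Qed.
Lemma Cpown_mult x y n : @eq C (Cpown (Cmult x y) n) (Cmult (Cpown x n) (Cpown y n)).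
Proof. induction n. rewrite !Cpown_0; ring. rewrite !Cpown_S, IHn; ring. Qed.
Lemma Cpown_R r n : @eq C (Cpown (RtoC r) n) (RtoC (r ^ n)).
Proof. induction n. reflexivity. rewrite Cpown_S, IHn. simpl pow.
  unfold RtoC, Cmult; simpl. f_equal; ring. Qed.
Lemma Cpown_inv x n : x <> RtoC 0 -> Cmult (Cpown x n) (Cpown (Cinv x) n) = RtoC 1.
Proof. intros H. induction n. rewrite !Cpown_0; ring.
  rewrite !Cpown_S. replace (Cmult (Cmult x (Cpown x n)) (Cmult (Cinv x) (Cpown (Cinv x) n)))
   with (Cmult (Cmult x (Cinv x)) (Cmult (Cpown x n) (Cpown (Cinv x) n))) by ring.
  rewrite IHn. field. auto. Qed.
Lemma Cmod_Cpown x n : Cmod (Cpown x n) = Cmod x ^ n.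
Proof. induction n. rewrite Cpown_0, Cmod_R, Rabs_R1; reflexivity.
  rewrite Cpown_S, Cmod_mult, IHn; reflexivity. Qed.

Lemma Cmod_csum f n : Cmod (csum f n) <= rsum (fun i => Cmod (f i)) n.
Proof. induction n; simpl. rewrite Cmod_R, Rabs_R0; lra.
  eapply Rle_trans. apply Cmod_triangle. lra. Qed.
Lemma rsum_le f g n : (forall i, (i < n)%nat -> f i <= g i) -> rsum f n <= rsum g n.
Proof. induction n; simpl; intros H. lra. assert (f n <= g n) by (apply H; lia).
  assert (rsum f n <= rsum g n) by (apply IHn; intros; apply H; lia). lra. Qed.
Lemma rsum_scal c f n : rsum (fun i => c * f i) n = c * rsum f n.
Proof. induction n; simpl. ring. rewrite IHn; ring. Qed.
Lemma rsum_geom r n : r <> 1 -> rsum (fun i => r ^ i) n = (1 - r ^ n) / (1 - r).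
Proof. intros H. induction n; simpl. field. lra. rewrite IHn. field. lra. Qed.
Fixpoint qp (q : R) (n : nat) : R :=
  match n with O => 1 | S k => qp q k * (1 - q ^ (S k)) end.
Definition qb (q : R) (N i : nat) : R :=
  if (i <=? N)%nat then qp q N / (qp q i * qp q (N - i)) else 0.
Fixpoint tt (i : nat) : nat := match i with O => O | S k => (tt k + k)%nat end.

Lemma qp_S q n : qp q (S n) = qp q n * (1 - q ^ (S n)). Proof. reflexivity. Qed.
Lemma qp_pos q n : 0 <= q < 1 -> 0 < qp q n.
Proof. intros Hq. induction n; rewrite ?qp_S. simpl; lra.
  assert (q ^ (S n) < 1). { apply pow_lt_1_compat; [lra|lia]. }
  apply Rmult_lt_0_compat; lra. Qed.

Lemma qb_0 q N : 0 <= q < 1 -> qb q N 0 = 1.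
Proof. intros Hq. unfold qb. simpl. rewrite Nat.sub_0_r.
  pose proof (qp_pos q N Hq). field. lra. Qed.
Lemma qb_N q N : 0 <= q < 1 -> qb q N N = 1.
Proof. intros Hq. unfold qb. rewrite Nat.leb_refl, Nat.sub_diag. simpl.
  pose proof (qp_pos q N Hq). field. lra. Qed.
Lemma qb_gt q N i : (N < i)%nat -> qb q N i = 0.
Proof. intros H. unfold qb. destruct (Nat.leb_spec i N); [lia|auto]. Qed.

Lemma qb_pascal q N i : 0 <= q < 1 ->
  qb q (S N) (S i) = qb q N (S i) + q ^ (N - i) * qb q N i.
Proof. intros Hq.
  destruct (Compare_dec.lt_eq_lt_dec i N) as [[Hlt|Heq]|Hgt].
  - destruct (Nat.le_exists_sub (S i) N) as [r [Hr _]]; [lia|].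
    subst N. unfold qb.
    replace (S (r + S i) - S i)%nat with (S r) by lia.
    replace (r + S i - S i)%nat with r by lia.
    replace (r + S i - i)%nat with (S r) by lia.
    replace (r + S i)%nat with (S (i + r)) by lia.
    destruct (Nat.leb_spec (S i) (S (S (i + r)))); [|lia].
    destruct (Nat.leb_spec (S i) (S (i + r))); [|lia].
    destruct (Nat.leb_spec i (S (i + r))); [|lia].
    pose proof (qp_pos q (i + r) Hq). pose proof (qp_pos q i Hq). pose proof (qp_pos q r Hq).
    assert (Ha : q ^ (S i) < 1) by (apply pow_lt_1_compat; [lra|lia]).
    assert (Hb : q ^ (S r) < 1) by (apply pow_lt_1_compat; [lra|lia]).
    assert (Hab : q ^ (S (S (i + r))) = q ^ (S i) * q ^ (S r)).
    { rewrite <- pow_add. f_equal. lia. }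
    assert (Hc : q ^ (S (i + r)) < 1) by (apply pow_lt_1_compat; [lra|lia]).
    rewrite !qp_S. rewrite Hab.
    field. repeat split; try lra; apply Rgt_not_eq; apply Rmult_lt_0_compat; lra.
  - subst. rewrite qb_N by auto. rewrite qb_gt by lia. rewrite qb_N by auto.
    rewrite Nat.sub_diag. simpl. ring.
  - rewrite !qb_gt by lia. ring. Qed.
Definition RC (r : R) : C := RtoC r.

Lemma RtoC_mult a b : RtoC (a * b) = Cmult (RtoC a) (RtoC b).
Proof. unfold RtoC, Cmult; simpl. f_equal; ring. Qed.
Lemma RtoC_plus a b : RtoC (a + b) = Cplus (RtoC a) (RtoC b).
Proof. unfold RtoC, Cplus; simpl. f_equal; ring. Qed.

Lemma qbinom q z N : 0 <= q < 1 ->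
  cprod (fun m => Cplus (RtoC 1) (Cmult z (RtoC (q ^ m)))) N =
  csum (fun i => Cmult (RtoC (qb q N i * q ^ (tt i))) (Cpown z i)) (S N).
Proof. intros Hq. induction N.
  - cbn [cprod csum]. rewrite qb_0 by auto. rewrite Cpown_0. simpl tt. rewrite pow_O. unfold RtoC.
    unfold Cmult, Cplus; simpl. f_equal; ring.
  - transitivity (Cmult (cprod (fun m => Cplus (RtoC 1) (Cmult z (RtoC (q ^ m)))) N)
       (Cplus (RtoC 1) (Cmult z (RtoC (q ^ N))))). reflexivity.
    rewrite IHN. rewrite (csum_first (fun i => Cmult (RtoC (qb q (S N) i * q ^ tt i)) (Cpown z i))).
    rewrite (csum_ext (fun i => Cmult (RtoC (qb q (S N) (S i) * q ^ tt (S i))) (Cpown z (S i))) (fun i => Cplus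
       (Cmult (RtoC (qb q N (S i) * q ^ tt (S i))) (Cpown z (S i)))
       (Cmult (Cmult z (RtoC (q ^ N))) (Cmult (RtoC (qb q N i * q ^ (tt i))) (Cpown z i))))).
    2:{ intros i Hi. cbv beta. rewrite qb_pascal by auto.
        rewrite Cpown_S. simpl tt.
        assert (E : q ^ (N - i) * q ^ (tt i + i) = q ^ N * q ^ tt i).
        { rewrite <- !pow_add. f_equal. lia. }
        rewrite Rmult_plus_distr_r, RtoC_plus.
        replace (q ^ (N - i) * qb q N i * q ^ (tt i + i)) with (qb q N i * (q ^ N * q ^ tt i))
          by (rewrite <- E; ring).
        rewrite !RtoC_mult. ring. }
    rewrite csum_add, csum_scal.
    rewrite qb_0 by auto.
    set (c := fun i => Cmult (RtoC (qb q N i * q ^ tt i)) (Cpown z i)).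
    assert (H0 : Cplus (Cmult (RtoC (1 * q ^ tt 0)) (Cpown z 0))
          (csum (fun i => c (S i)) (S N)) = csum c (S N)).
    { rewrite <- (qb_0 q N) at 1 by auto.
      change (Cmult (RtoC (qb q N 0 * q ^ tt 0)) (Cpown z 0)) with (c O).
      rewrite <- csum_first.
      transitivity (Cplus (csum c (S N)) (c (S N))). reflexivity.
      unfold c at 2. rewrite qb_gt by lia. rewrite Rmult_0_l.
      match goal with |- ?a = ?b => change (@eq C a b) end. ring. }
    rewrite Cplus_assoc. change (csum (fun i => Cmult (RtoC (qb q N (S i) * q ^ tt (S i))) (Cpown z (S i))) (S N)) with (csum (fun i => c (S i)) (S N)). rewrite H0. match goal with |- ?a = ?b => change (@eq C a b) end. ring. Qed.
Lemma powinv q m : q <> 0 -> q ^ m * (/ q) ^ m = 1.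
Proof. intros H. rewrite <- Rpow_mult_distr, Rinv_r by auto. apply pow1. Qed.

Lemma tt_double a : (2 * tt a + a = a * a)%nat.
Proof. induction a; simpl tt; lia. Qed.

Lemma T_tt j : Nat.div (j * (j + 1)) 2 = (tt j + j)%nat.
Proof. pose proof (tt_double j).
  replace (j * (j + 1))%nat with ((tt j + j) * 2)%nat by nia.
  apply Nat.div_mul. lia. Qed.

Lemma qtri_tt q j : qtri q j = q ^ (tt j + j).
Proof. unfold qtri. rewrite T_tt. reflexivity. Qed.

Lemma pow_cancel q k b c : q <> 0 -> q ^ (k * b + c) * ((/ q) ^ k) ^ b = q ^ c.
Proof. intros H. rewrite pow_add, <- pow_mult.
  pose proof (powinv q (k * b) H). 
  replace (q ^ (k * b) * q ^ c * (/ q) ^ (k * b)) with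
    ((q ^ (k * b) * (/ q) ^ (k * b)) * q ^ c) by ring.
  rewrite H0. ring. Qed.

Lemma F2_prod q x n : 0 < q -> x <> RtoC 0 ->
  cprod (fun m => Cplus (RtoC 1) (Cmult (RtoC (q ^ m)) (Cinv x))) n =
  Cmult (Cmult (RtoC (q ^ tt n)) (Cpown (Cinv x) n))
        (cprod (fun m => Cplus (RtoC 1) (Cmult x (RtoC ((/ q) ^ m)))) n).
Proof. intros Hq Hx. induction n.
  - cbn [cprod tt]. rewrite Cpown_0. rewrite pow_O.
    match goal with |- ?a = ?b => change (@eq C a b) end. ring.
  - transitivity (Cmult (cprod (fun m => Cplus (RtoC 1) (Cmult (RtoC (q ^ m)) (Cinv x))) n)
      (Cplus (RtoC 1) (Cmult (RtoC (q ^ n)) (Cinv x)))). reflexivity.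
    rewrite IHn. cbn [cprod tt]. rewrite Cpown_S, pow_add.
    assert (E : Cmult (RtoC (q ^ n)) (RtoC ((/ q) ^ n)) = RtoC 1).
    { rewrite <- RtoC_mult, powinv by lra. reflexivity. }
    rewrite RtoC_mult.
    match goal with |- ?a = ?b => change (@eq C a b) end.
    replace (Cplus (RtoC 1) (Cmult (RtoC (q ^ n)) (Cinv x))) with
       (Cmult (Cmult (RtoC (q ^ n)) (Cinv x)) (Cplus (RtoC 1) (Cmult x (RtoC ((/ q) ^ n))))).
    ring.
    replace (Cmult (Cmult (RtoC (q ^ n)) (Cinv x)) (Cplus (RtoC 1) (Cmult x (RtoC ((/ q) ^ n)))))
      with (Cplus (Cmult (RtoC (q ^ n)) (Cinv x)) (Cmult (Cmult x (Cinv x)) (Cmult (RtoC (q ^ n)) (RtoC ((/ q) ^ n)))))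
      by ring.
    rewrite E, Cinv_r by auto. ring. Qed.
Lemma zprod q x k : 0 < q ->
  cprod (fun m => Cplus (RtoC 1) (Cmult (Cmult x (RtoC ((/ q) ^ k))) (RtoC (q ^ m)))) (S k + S k) =
  Cmult (cprod (fun m => Cplus (RtoC 1) (Cmult x (RtoC ((/ q) ^ m)))) (S k))
        (cprod (fun m => Cplus (RtoC 1) (Cmult x (RtoC (q ^ (S m))))) (S k)).
Proof. intros Hq. rewrite cprod_split. f_equal.
  - rewrite cprod_rev. apply cprod_ext. intros m Hm. cbv beta.
    replace (S k - 1 - m)%nat with (k - m)%nat by lia.
    assert (E : (/ q) ^ k * q ^ (k - m) = (/ q) ^ m).
    { replace k with (m + (k - m))%nat at 1 by lia. rewrite pow_add.
      rewrite Rmult_assoc, (Rmult_comm ((/ q) ^ (k - m))), powinv by lra. ring. }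
    rewrite <- E, RtoC_mult. match goal with |- ?a = ?b => change (@eq C a b) end. ring.
  - apply cprod_ext. intros m Hm. cbv beta.
    assert (E : (/ q) ^ k * q ^ (S k + m) = q ^ (S m)).
    { replace (S k + m)%nat with (k + S m)%nat by lia. rewrite pow_add.
      rewrite <- Rmult_assoc, (Rmult_comm ((/ q) ^ k)), powinv by lra. ring. }
    rewrite <- E, RtoC_mult. match goal with |- ?a = ?b => change (@eq C a b) end. ring.
Qed.

Definition Afun q x j := Cmult (RtoC (qtri q j)) (Cpown x j).
Definition Bfun q x l := Cmult (RtoC (qtri q l)) (Cpown (Cinv x) (S l)).
Definition Pp q x n := cprod (fun m => Cmult (Cplus (RtoC 1) (Cmult x (RtoC (q ^ (S m)))))
                                          (Cplus (RtoC 1) (Cmult (RtoC (q ^ m)) (Cinv x)))) n.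

Lemma Cpown_cancel x a b : x <> RtoC 0 ->
  Cmult (Cpown x (a + b)) (Cpown (Cinv x) a) = Cpown x b.
Proof. intros H. rewrite Cpown_add.
  replace (Cmult (Cmult (Cpown x a) (Cpown x b)) (Cpown (Cinv x) a)) with
    (Cmult (Cmult (Cpown x a) (Cpown (Cinv x) a)) (Cpown x b)) by
    (match goal with |- ?a = ?b => change (@eq C a b) end; ring).
  rewrite Cpown_inv by auto. match goal with |- ?a = ?b => change (@eq C a b) end; ring. Qed.

Lemma nat_id1 k j : (tt (S k) + tt (S k + j) = k * (S k + j) + (tt j + j))%nat.
Proof. pose proof (tt_double (S k)). pose proof (tt_double (S k + j)). pose proof (tt_double j). nia. Qed.
Lemma nat_id2 k l : (l <= k)%nat -> (tt (S k) + tt (k - l) = k * (k - l) + (tt l + l))%nat.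
Proof. intros H. destruct (Nat.le_exists_sub l k H) as [d [Hd _]]. subst k.
  replace (d + l - l)%nat with d by lia.
  pose proof (tt_double (S (d + l))). pose proof (tt_double d). pose proof (tt_double l). nia. Qed.
Ltac cring := match goal with |- ?a = ?b => change (@eq C a b) end; ring.

Lemma Tn_identity q x k : 0 < q < 1 -> x <> RtoC 0 ->
  Cmult (RtoC (qp q (S k))) (Pp q x (S k)) =
  Cplus (csum (fun j => Cmult (RtoC (qp q (S k) * qb q (S k + S k) (S k + j))) (Afun q x j)) (S (S k)))
        (csum (fun l => Cmult (RtoC (qp q (S k) * qb q (S k + S k) (k - l))) (Bfun q x l)) (S k)).
Proof. intros Hq Hx. set (n := S k).
  unfold Pp. rewrite cprod_mult, F2_prod by (auto; lra).
  set (z := Cmult x (RtoC ((/ q) ^ k))).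
  assert (Hz : Cmult (cprod (fun m => Cplus (RtoC 1) (Cmult x (RtoC ((/ q) ^ m)))) n)
                     (cprod (fun m => Cplus (RtoC 1) (Cmult x (RtoC (q ^ (S m))))) n)
             = csum (fun i => Cmult (RtoC (qb q (n + n) i * q ^ (tt i))) (Cpown z i)) (S (n + n))).
  { rewrite <- qbinom by lra. unfold n, z. rewrite zprod by lra. reflexivity. }
  set (g := fun i => Cmult (RtoC (qb q (n + n) i * q ^ (tt i))) (Cpown z i)).
  fold g in Hz.
  set (K := Cmult (Cmult (RtoC (qp q n)) (RtoC (q ^ tt n))) (Cpown (Cinv x) n)).
  transitivity (Cmult K (csum g (S (n + n)))).
  { rewrite <- Hz. unfold K. cring. }
  replace (S (n + n)) with (n + S n)%nat by lia.
  rewrite csum_split, Cmult_plus_distr_l, <- !csum_scal, Cplus_comm.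
  f_equal.
  - apply csum_ext. intros j Hj. unfold g, z, Afun. rewrite Cpown_mult, Cpown_R.
    assert (Er : q ^ tt n * q ^ tt (n + j) * ((/ q) ^ k) ^ (n + j) = qtri q j).
    { rewrite <- pow_add. unfold n. rewrite nat_id1, qtri_tt. apply pow_cancel. lra. }
    rewrite <- Er, <- (Cpown_cancel x n j Hx). unfold K. rewrite !RtoC_mult. cring.
  - rewrite csum_rev. apply csum_ext. intros l Hl. cbv beta. unfold g, z, Bfun.
    replace (n - 1 - l)%nat with (k - l)%nat by (unfold n; lia).
    rewrite Cpown_mult, Cpown_R.
    assert (Er : q ^ tt n * q ^ tt (k - l) * ((/ q) ^ k) ^ (k - l) = qtri q l).
    { rewrite <- pow_add. unfold n. rewrite nat_id2 by (unfold n in Hl; lia). rewrite qtri_tt.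
      apply pow_cancel. lra. }
    rewrite <- Er. unfold K.
    replace n with (k - l + S l)%nat at 3 by (unfold n in *; lia).
    rewrite Cpown_add.
    pose proof (Cpown_inv x (k - l) Hx).
    rewrite !RtoC_mult.
    transitivity (Cmult (Cmult (Cpown x (k - l)) (Cpown (Cinv x) (k - l)))
       (Cmult (RtoC (qp q n)) (Cmult (RtoC (qb q (n + n) (k - l))) (Cmult
         (Cmult (Cmult (RtoC (q ^ tt n)) (RtoC (q ^ tt (k - l)))) (RtoC (((/ q) ^ k) ^ (k - l))))
         (Cpown (Cinv x) (S l)))))).
    cring. rewrite H. cring.
Qed.
Lemma pow_le_mono q m d : 0 <= q <= 1 -> q ^ (m + d) <= q ^ m.
Proof. intros H. rewrite pow_add. assert (0 <= q ^ d <= 1).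
  { split. apply pow_le; lra. induction d. simpl; lra. simpl.
    assert (0 <= q ^ d) by (apply pow_le; lra). nra. }
  assert (0 <= q ^ m) by (apply pow_le; lra). nra. Qed.

Lemma qp_ratio q a d : 0 <= q < 1 ->
  0 <= qp q (a + d) / qp q a <= 1 /\
  1 - qp q (a + d) / qp q a <= (q ^ (S a) - q ^ (S (a + d))) / (1 - q).
Proof. intros Hq. pose proof (qp_pos q a Hq) as Ha. induction d.
  - rewrite Nat.add_0_r. replace (qp q a / qp q a) with 1 by (field; lra).
    replace ((q ^ S a - q ^ S a) / (1 - q)) with 0 by (field; lra). lra.
  - replace (a + S d)%nat with (S (a + d)) by lia. rewrite qp_S.
    set (R := qp q (a + d) / qp q a) in *.
    replace (qp q (a + d) * (1 - q ^ S (a + d)) / qp q a) with (R * (1 - q ^ S (a + d)))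
      by (unfold R; field; lra).
    set (t := q ^ S (a + d)) in *.
    assert (Ht : 0 <= t < 1) by (apply pow_lt_1_compat; [lra|lia]).
    replace (q ^ S (S (a + d))) with (q * t) by reflexivity.
    destruct IHd as [[H1 H2] H3]. split. split; nra.
    assert (E : (q ^ S a - q * t) / (1 - q) = (q ^ S a - t) / (1 - q) + t) by (field; lra).
    rewrite E. nra. Qed.

Lemma W_bound q n a : 0 <= q < 1 -> (a <= n)%nat ->
  0 <= qp q n * qb q (n + n) a <= 1 /\ 1 - qp q n * qb q (n + n) a <= q ^ (S a) / (1 - q).
Proof. intros Hq Han. unfold qb. destruct (Nat.leb_spec a (n + n)); [|lia].
  pose proof (qp_ratio q a (n - a) Hq) as [[A1 A2] A3].
  pose proof (qp_ratio q (n + n - a) a Hq) as [[B1 B2] B3].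
  replace (a + (n - a))%nat with n in * by lia.
  replace (n + n - a + a)%nat with (n + n)%nat in * by lia.
  pose proof (qp_pos q a Hq). pose proof (qp_pos q (n + n - a) Hq).
  replace (qp q n * (qp q (n + n) / (qp q a * qp q (n + n - a)))) with
    ((qp q n / qp q a) * (qp q (n + n) / qp q (n + n - a))) by (field; lra).
  set (R1 := qp q n / qp q a) in *. set (R2 := qp q (n + n) / qp q (n + n - a)) in *.
  assert (P1 : q ^ S (n + n - a) <= q ^ S n).
  { replace (S (n + n - a)) with (S n + (n - a))%nat by lia. apply pow_le_mono; lra. }
  assert (P2 : 0 <= q ^ S (n + n)) by (apply pow_le; lra).
  assert (P3 : (q ^ S a - q ^ S n) / (1 - q) + (q ^ S (n + n - a) - q ^ S (n + n)) / (1 - q)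
               <= q ^ S a / (1 - q)).
  { unfold Rdiv. rewrite <- Rmult_plus_distr_r. apply Rmult_le_compat_r.
    apply Rlt_le, Rinv_0_lt_compat; lra. lra. }
  split. split; nra. nra. Qed.

Lemma W_bound' q n a : 0 <= q < 1 -> (a <= n)%nat ->
  0 <= qp q n * qb q (n + n) (n + n - a) <= 1 /\
  1 - qp q n * qb q (n + n) (n + n - a) <= q ^ (S a) / (1 - q).
Proof. intros Hq Han. replace (qb q (n + n) (n + n - a)) with (qb q (n + n) a).
  apply W_bound; auto.
  unfold qb. destruct (Nat.leb_spec a (n + n)); [|lia].
  destruct (Nat.leb_spec (n + n - a) (n + n)); [|lia].
  replace (n + n - (n + n - a))%nat with a by lia. rewrite (Rmult_comm (qp q a)). reflexivity. Qed.
Lemma csum_diff (c : nat -> R) f n :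
  Cminus (csum (fun i => Cmult (RtoC (c i)) (f i)) n) (csum f n) =
  csum (fun i => Cmult (RtoC (c i - 1)) (f i)) n.
Proof. induction n; cbn [csum]. cring.
  rewrite <- IHn. unfold Rminus. rewrite RtoC_plus. replace (RtoC (Ropp 1)) with (Copp (RtoC 1)).
  cring. unfold RtoC, Copp. simpl. f_equal; ring. Qed.

Lemma Cmod_csum_w (c : nat -> R) f (b : nat -> R) n :
  (forall i, (i < n)%nat -> Rabs (c i - 1) * Cmod (f i) <= b i) ->
  Cmod (csum (fun i => Cmult (RtoC (c i - 1)) (f i)) n) <= rsum b n.
Proof. intros H. eapply Rle_trans. apply Cmod_csum. apply rsum_le. intros i Hi.
  rewrite Cmod_mult, Cmod_R. apply H; auto. Qed.

Lemma qtri_pos q j : 0 < q -> 0 < qtri q j.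
Proof. intros. unfold qtri. apply pow_lt; auto. Qed.

Lemma Cmod_A q x j : 0 < q -> Cmod x = 3 -> Cmod (Afun q x j) = qtri q j * 3 ^ j.
Proof. intros Hq Hx. unfold Afun. rewrite Cmod_mult, Cmod_R, Cmod_Cpown, Hx.
  rewrite Rabs_pos_eq. auto. apply Rlt_le, qtri_pos; auto. Qed.

Lemma x_nz x : Cmod x = 3 -> x <> RtoC 0.
Proof. intros Hx E. rewrite E, Cmod_R, Rabs_R0 in Hx. lra. Qed.

Lemma Cmod_B q x l : 0 < q -> Cmod x = 3 -> Cmod (Bfun q x l) = qtri q l * (/ 3) ^ (S l).
Proof. intros Hq Hx. unfold Bfun. rewrite Cmod_mult, Cmod_R, Cmod_Cpown, Cmod_inv, Hx.
  rewrite Rabs_pos_eq. auto. apply Rlt_le, qtri_pos; auto. apply x_nz; auto. Qed.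

Definition Tn q x n := Cmult (RtoC (qp q n)) (Pp q x n).

Lemma err_bound q x k : 0 < q < 1 -> Cmod x = 3 ->
  Cmod (Cminus (Tn q x (S k)) (Cplus (csum (Afun q x) (S (S k))) (csum (Bfun q x) (S k))))
  <= q ^ (S k) / (1 - q) * (rsum (fun j => q ^ (tt j) * 3 ^ j) (S (S k)) + 1).
Proof. intros Hq Hx. set (n := S k). unfold Tn. unfold n. rewrite Tn_identity by (auto; apply x_nz; auto).
  fold n.
  replace (Cminus (Cplus (csum (fun j => Cmult (RtoC (qp q n * qb q (n + n) (n + j))) (Afun q x j)) (S n))
         (csum (fun l => Cmult (RtoC (qp q n * qb q (n + n) (k - l))) (Bfun q x l)) n))
        (Cplus (csum (Afun q x) (S n)) (csum (Bfun q x) n)))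
   with (Cplus (Cminus (csum (fun j => Cmult (RtoC (qp q n * qb q (n + n) (n + j))) (Afun q x j)) (S n))
                       (csum (Afun q x) (S n)))
               (Cminus (csum (fun l => Cmult (RtoC (qp q n * qb q (n + n) (k - l))) (Bfun q x l)) n)
                       (csum (Bfun q x) n))) by cring.
  rewrite !csum_diff.
  eapply Rle_trans. apply Cmod_triangle.
  assert (Hq1 : 0 < 1 - q) by lra.
  assert (E1 : Cmod (csum (fun i => Cmult (RtoC (qp q n * qb q (n + n) (n + i) - 1)) (Afun q x i)) (S n))
     <= rsum (fun j => q ^ (S n) / (1 - q) * (q ^ (tt j) * 3 ^ j)) (S n)).
  { apply Cmod_csum_w. intros j Hj. rewrite Cmod_A by (auto; lra).
    pose proof (W_bound' q n (n - j) ltac:(lra) ltac:(lia)) as [[W1 W2] W3].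
    replace (n + n - (n - j))%nat with (n + j)%nat in * by lia.
    rewrite Rabs_minus_sym, Rabs_pos_eq by lra.
    rewrite qtri_tt.
    assert (Ep : q ^ S (n - j) * q ^ (tt j + j) = q ^ S n * q ^ tt j).
    { rewrite <- !pow_add. f_equal. lia. }
    assert (0 <= q ^ (tt j + j) * 3 ^ j) by (apply Rmult_le_pos; apply pow_le; lra).
    apply Rle_trans with (q ^ S (n - j) / (1 - q) * (q ^ (tt j + j) * 3 ^ j)).
    apply Rmult_le_compat_r; auto.
    right. unfold Rdiv. replace (q ^ S (n - j) * / (1 - q) * (q ^ (tt j + j) * 3 ^ j))
      with ((q ^ S (n - j) * q ^ (tt j + j)) * / (1 - q) * 3 ^ j) by ring. rewrite Ep. ring. }
  assert (E2 : Cmod (csum (fun i => Cmult (RtoC (qp q n * qb q (n + n) (k - i) - 1)) (Bfun q x i)) n)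
     <= rsum (fun l => q ^ n / (1 - q) * (/ 3) ^ (S l)) n).
  { apply Cmod_csum_w. intros l Hl. rewrite Cmod_B by (auto; lra).
    pose proof (W_bound q n (k - l) ltac:(lra) ltac:(lia)) as [[W1 W2] W3].
    rewrite Rabs_minus_sym, Rabs_pos_eq by lra.
    rewrite qtri_tt.
    assert (Ep : q ^ S (k - l) * q ^ (tt l + l) = q ^ n * q ^ tt l).
    { rewrite <- !pow_add. f_equal. unfold n in *. lia. }
    assert (0 <= q ^ (tt l + l) * (/ 3) ^ (S l)) by (apply Rmult_le_pos; apply pow_le; lra).
    apply Rle_trans with (q ^ S (k - l) / (1 - q) * (q ^ (tt l + l) * (/ 3) ^ (S l))).
    apply Rmult_le_compat_r; auto.
    assert (Hl1 : q ^ tt l <= 1) by (pose proof (pow_le_mono q 0 (tt l) ltac:(lra)); simpl in *; lra).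
    unfold Rdiv. replace (q ^ S (k - l) * / (1 - q) * (q ^ (tt l + l) * (/ 3) ^ S l))
      with ((q ^ S (k - l) * q ^ (tt l + l)) * / (1 - q) * (/ 3) ^ S l) by ring. rewrite Ep.
    assert (0 <= q ^ n) by (apply pow_le; lra).
    assert (0 <= / (1 - q)) by (apply Rlt_le, Rinv_0_lt_compat; lra).
    assert (0 <= (/ 3) ^ S l) by (apply pow_le; lra).
    assert (0 <= q ^ n * / (1 - q) * (/ 3) ^ S l) by (apply Rmult_le_pos; [apply Rmult_le_pos|]; auto).
    replace (q ^ n * q ^ tt l * / (1 - q) * (/ 3) ^ S l) with
      (q ^ tt l * (q ^ n * / (1 - q) * (/ 3) ^ S l)) by ring. nra. }
  rewrite rsum_scal in E1, E2.
  assert (G3 : rsum (fun l => (/ 3) ^ S l) n <= 1 / 2).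
  { rewrite (rsum_ext _ (fun l => / 3 * (/ 3) ^ l)) by reflexivity.
    rewrite rsum_scal, rsum_geom by lra.
    assert (0 <= (/ 3) ^ n) by (apply pow_le; lra).
    apply Rle_trans with (/ 3 * (1 / (1 - / 3))). 
    apply Rmult_le_compat_l. lra. unfold Rdiv. apply Rmult_le_compat_r. 
    apply Rlt_le, Rinv_0_lt_compat; lra. lra. lra. }
  assert (Gs : 0 <= rsum (fun j => q ^ tt j * 3 ^ j) (S n)).
  { eapply Rle_trans with (rsum (fun _ => 0) (S n)).
    clear. induction (S n); simpl; lra.
    apply rsum_le. intros; apply Rmult_le_pos; apply pow_le; lra. }
  assert (Hqn : q ^ S n <= q ^ n) by (replace (S n) with (n + 1)%nat by lia; apply pow_le_mono; lra).
  assert (0 <= q ^ S n) by (apply pow_le; lra).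
  assert (0 < / (1 - q)) by (apply Rinv_0_lt_compat; lra).
  unfold Rdiv in *.
  assert (q ^ S n * / (1 - q) * rsum (fun j => q ^ tt j * 3 ^ j) (S n) <=
          q ^ n * / (1 - q) * rsum (fun j => q ^ tt j * 3 ^ j) (S n)).
  { apply Rmult_le_compat_r; auto. apply Rmult_le_compat_r; lra. }
  assert (q ^ n * / (1 - q) * rsum (fun l => (/ 3) ^ S l) n <= q ^ n * / (1 - q) * 1).
  { apply Rmult_le_compat_l. apply Rmult_le_pos. apply pow_le; lra. lra. lra. }
  lra.
Qed.
Lemma rsum_sum_n a N : rsum a (S N) = sum_n a N.
Proof. induction N. simpl. rewrite sum_O. ring.
  rewrite sum_Sn. change (rsum a (S (S N))) with (rsum a (S N) + a (S N)). rewrite IHN. reflexivity. Qed.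

Lemma Re_csum a N : Re (csum a N) = rsum (fun i => Re (a i)) N.
Proof. induction N; simpl. reflexivity. rewrite <- IHN. reflexivity. Qed.
Lemma Im_csum a N : Im (csum a N) = rsum (fun i => Im (a i)) N.
Proof. induction N; simpl. reflexivity. rewrite <- IHN. reflexivity. Qed.

Lemma Re_le_Cmod z : Rabs (Re z) <= Cmod z.
Proof. pose proof (Rmax_Cmod z). pose proof (Rmax_l (Rabs (fst z)) (Rabs (snd z))). unfold Re. lra. Qed.
Lemma Im_le_Cmod z : Rabs (Im z) <= Cmod z.
Proof. pose proof (Rmax_Cmod z). pose proof (Rmax_r (Rabs (fst z)) (Rabs (snd z))). unfold Im. lra. Qed.

Lemma Cmod_le_sum z : Cmod z <= Rabs (Re z) + Rabs (Im z).
Proof. destruct z as [u v]. unfold Cmod, Re, Im; cbn [fst snd].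
  rewrite <- (sqrt_square (Rabs u + Rabs v)) by (pose proof (Rabs_pos u); pose proof (Rabs_pos v); lra).
  apply sqrt_le_1_alt. rewrite <- (pow2_abs u), <- (pow2_abs v).
  pose proof (Rabs_pos u); pose proof (Rabs_pos v). nra. Qed.

Lemma series_cv a : ex_series a -> Un_cv (fun N => rsum a (S N)) (Series a).
Proof. intros H. apply Series_correct in H. apply is_lim_seq_Reals.
  eapply is_lim_seq_ext. intros n. symmetry. apply rsum_sum_n. exact H. Qed.

Lemma rsum_le_series a N : (forall i, 0 <= a i) -> ex_series a -> rsum a N <= Series a.
Proof. intros Hp He. destruct (Rle_or_lt (rsum a N) (Series a)) as [h|h]; auto.
  exfalso. pose proof (series_cv a He) as Hc.
  destruct (Hc (rsum a N - Series a)) as [N0 HN0]. lra.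
  assert (Hm : forall m, rsum a N <= rsum a (N + m)).
  { induction m. rewrite Nat.add_0_r; lra. rewrite Nat.add_succ_r. simpl. specialize (Hp (N + m)%nat). lra. }
  specialize (HN0 (N0 + N)%nat ltac:(lia)). unfold Rdist in HN0.
  specialize (Hm (S N0)). replace (N + S N0)%nat with (S (N0 + N)) in Hm by lia.
  apply Rabs_def2 in HN0. lra. Qed.

Lemma gamma_series q c : 0 < q < 1 -> 0 < c -> ex_series (fun j => q ^ (tt j) * c ^ j).
Proof. intros Hq Hc.
  assert (H : ex_series (fun j => Rabs (q ^ (tt j) * c ^ j))).
  { apply ex_series_DAlembert with 0. lra.
    intros n. apply Rgt_not_eq. apply Rmult_lt_0_compat; apply pow_lt; lra.
    eapply is_lim_seq_ext. intros n. symmetry.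
    replace ((q ^ tt (S n) * c ^ S n) / (q ^ tt n * c ^ n)) with (q ^ n * c).
    reflexivity. simpl tt. rewrite pow_add. simpl pow.
    assert (0 < q ^ tt n) by (apply pow_lt; lra). assert (0 < c ^ n) by (apply pow_lt; lra).
    field. lra.
    apply (proj1 (is_lim_seq_abs_0 _)). replace (Finite 0) with (Rbar_mult 0 c).
    apply is_lim_seq_scal_r. apply is_lim_seq_geom. rewrite Rabs_pos_eq; lra.
    simpl. f_equal. ring. }
  eapply ex_series_ext. 2: exact H. intros n. apply Rabs_pos_eq.
  apply Rmult_le_pos; apply pow_le; lra. Qed.
Lemma Re_Cminus z w : Re (Cminus z w) = Re z - Re w.
Proof. reflexivity. Qed.
Lemma Im_Cminus z w : Im (Cminus z w) = Im z - Im w.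
Proof. reflexivity. Qed.

Definition exC (a : nat -> C) := ex_series (fun i => Re (a i)) /\ ex_series (fun i => Im (a i)).

Lemma exC_le a b : (forall i, Cmod (a i) <= b i) -> ex_series b -> exC a.
Proof. intros H Hb. split; apply (@ex_series_le R_AbsRing R_CompleteNormedModule _ b); auto; intros i; change norm with Rabs.
  eapply Rle_trans; [apply Re_le_Cmod|auto]. eapply Rle_trans; [apply Im_le_Cmod|auto]. Qed.

Lemma cseries_conv a : exC a -> forall eps, 0 < eps ->
  exists N0, forall N, (N0 <= N)%nat -> Cmod (Cminus (CSeries a) (csum a (S N))) < eps.
Proof. intros [H1 H2] eps He.
  destruct (series_cv _ H1 (eps / 2)) as [N1 HN1]. lra.
  destruct (series_cv _ H2 (eps / 2)) as [N2 HN2]. lra.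
  exists (N1 + N2)%nat. intros N HN.
  eapply Rle_lt_trans. apply Cmod_le_sum.
  rewrite Re_Cminus, Im_Cminus, Re_csum, Im_csum.
  specialize (HN1 N ltac:(lia)). specialize (HN2 N ltac:(lia)). unfold Rdist in *.
  unfold CSeries. change (Re (Series (fun n => Re (a n)), Series (fun n => Im (a n)))) with (Series (fun n => Re (a n))). change (Im (Series (fun n => Re (a n)), Series (fun n => Im (a n)))) with (Series (fun n => Im (a n))).
  rewrite Rabs_minus_sym in HN1, HN2. lra. Qed.

Lemma cseries_le a M : exC a -> (forall N, Cmod (csum a N) <= M) -> Cmod (CSeries a) <= M.
Proof. intros He HM. destruct (Rle_or_lt (Cmod (CSeries a)) M) as [h|h]; auto. exfalso.
  destruct (cseries_conv a He (Cmod (CSeries a) - M)) as [N0 HN0]. lra.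
  specialize (HN0 N0 (le_n _)). specialize (HM (S N0)).
  pose proof (Cmod_triangle (Cminus (CSeries a) (csum a (S N0))) (csum a (S N0))).
  replace (Cplus (Cminus (CSeries a) (csum a (S N0))) (csum a (S N0))) with (CSeries a) in H by cring.
  lra. Qed.

Lemma CSeries_first a : exC a -> CSeries a = Cplus (a O) (CSeries (fun k => a (S k))).
Proof. intros [H1 H2]. unfold CSeries, Cplus. cbn [fst snd].
  rewrite (Series_incr_1 _ H1), (Series_incr_1 _ H2). reflexivity. Qed.

Lemma exC_shift a : exC a -> exC (fun k => a (S k)).
Proof. intros [H1 H2]. split.
  apply (ex_series_incr_1 (fun i => Re (a i))); auto.
  apply (ex_series_incr_1 (fun i => Im (a i))); auto. Qed.
Definition pp t := 1 - 42/10*t + 9*t^2.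

Lemma g_le1 t : 0 <= t <= 1 -> (1-t)^2 * pp t <= 1.
Proof. unfold pp. intros H.
  assert (Hp : 0 <= 1 - 42/10*t + 9*t^2) by nra.
  destruct (Rle_or_lt t (7/15)).
  - assert (1 - 42/10*t + 9*t^2 <= 1) by nra. assert ((1-t)^2 <= 1) by nra. nra.
  - destruct (Rle_or_lt t (3/5)).
    + assert (1 - 42/10*t + 9*t^2 <= 172/100) by nra. assert ((1-t)^2 <= 64/225) by nra. nra.
    + assert (1 - 42/10*t + 9*t^2 <= 58/10) by nra. assert ((1-t)^2 <= 4/25) by nra. nra.
Qed.

Lemma g_band t lo hi M : 0 <= lo -> lo <= t <= hi -> hi <= 1 -> pp lo <= M -> pp hi <= M ->
  (1-t)^2 * pp t <= (1-lo)^2 * M.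
Proof. unfold pp. intros H0 Ht H1 Hlo Hhi.
  assert (Hp : 0 <= 1 - 42/10*t + 9*t^2) by nra.
  assert (Hpt : 1 - 42/10*t + 9*t^2 <= M).
  { destruct (Req_dec lo hi) as [E|E].
    - subst. assert (t = hi) by lra. subst. lra.
    - assert (Hd : 0 < hi - lo) by lra.
      assert (Hk : 0 <= 9 * (hi - lo) * (t - lo) * (hi - t)).
      { apply Rmult_le_pos; [apply Rmult_le_pos|]; lra. }
      assert (Hid : (1 - 42/10*lo + 9*lo^2) * (hi - t) + (1 - 42/10*hi + 9*hi^2) * (t - lo)
                    - (1 - 42/10*t + 9*t^2) * (hi - lo) = 9 * (hi - lo) * (t - lo) * (hi - t)) by ring.
      assert ((1 - 42/10*t + 9*t^2) * (hi - lo) <= M * (hi - lo)) by nra.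
      apply Rmult_le_reg_r with (hi - lo); lra. }
  assert (Hsq : (1-t)^2 <= (1-lo)^2) by nra.
  apply Rle_trans with ((1-lo)^2 * (1 - 42/10*t + 9*t^2)).
  apply Rmult_le_compat_r; lra. apply Rmult_le_compat_l. nra. lra. Qed.

Lemma Cmod_sq z : Cmod z ^ 2 = fst z ^ 2 + snd z ^ 2.
Proof. unfold Cmod. rewrite pow2_sqrt. auto. nra. Qed.

Lemma sc1 phi : cos phi ^ 2 + sin phi ^ 2 = 1.
Proof. pose proof (sin2_cos2 phi). unfold Rsqr in H. nra. Qed.

Lemma Cmod_arc phi : Cmod (arc_pt phi) = 3.
Proof. pose proof (sc1 phi). unfold Cmod, arc_pt; cbn [fst snd].
  replace ((3 * cos phi) ^ 2 + (3 * sin phi) ^ 2) with (3 * 3) by nra.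
  apply sqrt_square. lra. Qed.

Lemma Cinv_arc phi : Cinv (arc_pt phi) = (cos phi / 3, - sin phi / 3).
Proof. pose proof (sc1 phi). unfold Cinv, arc_pt; cbn [fst snd].
  replace ((3 * cos phi) ^ 2 + (3 * sin phi) ^ 2) with 9 by nra. f_equal; field. Qed.

Definition fac q x m := (1 - q ^ (S m)) * Cmod (Cplus (RtoC 1) (Cmult x (RtoC (q ^ (S m))))) *
   Cmod (Cplus (RtoC 1) (Cmult (RtoC (q ^ m)) (Cinv x))).

Lemma Tn_mod q x n : 0 <= q < 1 -> Cmod (Tn q x n) = rprod (fac q x) n.
Proof. intros Hq. induction n.
  - unfold Tn, Pp. cbn [cprod qp rprod]. replace (Cmult (RtoC 1) (RtoC 1)) with (RtoC 1) by cring. rewrite Cmod_R, Rabs_R1; reflexivity.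
  - assert (E : Tn q x (S n) = Cmult (Cmult (Tn q x n) (RtoC (1 - q ^ (S n))))
       (Cmult (Cplus (RtoC 1) (Cmult x (RtoC (q ^ (S n))))) (Cplus (RtoC 1) (Cmult (RtoC (q ^ n)) (Cinv x))))).
    { unfold Tn, Pp. rewrite qp_S, RtoC_mult. cbn [cprod]. cring. }
    rewrite E, !Cmod_mult, Cmod_R, IHn. cbn [rprod]. unfold fac.
    rewrite Rabs_pos_eq. ring.
    assert (q ^ S n < 1) by (apply pow_lt_1_compat; [lra|lia]). lra. Qed.

Lemma pow_le1 q m : 0 <= q <= 1 -> q ^ m <= 1.
Proof. intros H. pose proof (pow_le_mono q 0 m H). simpl in H0. lra. Qed.

Lemma fac_bounds q phi m : 0 <= q < 1 -> cos phi <= -7/10 ->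
  0 <= fac q (arc_pt phi) m /\
  fac q (arc_pt phi) m ^ 2 <= (1 - q ^ (S m)) ^ 2 * pp (q ^ (S m)).
Proof. intros Hq Hc. unfold fac. rewrite Cinv_arc.
  set (t := q ^ S m). set (s := q ^ m).
  assert (Ht : 0 <= t < 1) by (apply pow_lt_1_compat; [lra|lia]).
  assert (Hs : 0 <= s <= 1) by (split; [apply pow_le; lra | apply pow_le1; lra]).
  set (F1 := Cplus (RtoC 1) (Cmult (arc_pt phi) (RtoC t))).
  set (F2 := Cplus (RtoC 1) (Cmult (RtoC s) (cos phi / 3, - sin phi / 3))).
  pose proof (sc1 phi) as Hsc.
  assert (E1 : Cmod F1 ^ 2 = 1 + 6 * cos phi * t + 9 * t ^ 2).
  { rewrite Cmod_sq. unfold F1, arc_pt, Cplus, Cmult, RtoC; cbn [fst snd].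
    transitivity (1 + 6 * cos phi * t + 9 * t ^ 2 * (cos phi ^ 2 + sin phi ^ 2)). ring.
    rewrite Hsc. ring. }
  assert (E2 : Cmod F2 ^ 2 = 1 + 2 * s * cos phi / 3 + s ^ 2 / 9).
  { rewrite Cmod_sq. unfold F2, Cplus, Cmult, RtoC; cbn [fst snd].
    transitivity (1 + 2 * s * cos phi / 3 + s ^ 2 * (cos phi ^ 2 + sin phi ^ 2) / 9). field.
    rewrite Hsc. field. }
  assert (H2 : Cmod F2 ^ 2 <= 1) by (rewrite E2; nra).
  assert (H1 : Cmod F1 ^ 2 <= pp t) by (rewrite E1; unfold pp; nra).
  pose proof (Cmod_ge_0 F1). pose proof (Cmod_ge_0 F2).
  split. apply Rmult_le_pos; [apply Rmult_le_pos|]; lra.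
  replace (((1 - t) * Cmod F1 * Cmod F2) ^ 2) with ((1 - t) ^ 2 * Cmod F1 ^ 2 * Cmod F2 ^ 2) by ring.
  assert (0 <= (1 - t) ^ 2) by nra. assert (0 <= Cmod F1 ^ 2) by nra.
  apply Rle_trans with ((1 - t) ^ 2 * Cmod F1 ^ 2 * 1).
  apply Rmult_le_compat_l; [nra|lra].
  rewrite Rmult_1_r. apply Rmult_le_compat_l; lra. Qed.
Fixpoint decr (L : list nat) (n : nat) : Prop :=
  match L with nil => True | m :: L' => (m < n)%nat /\ decr L' m end.
Definition lprod (L : list R) := fold_right Rmult 1 L.

Lemma rprod_bounds f n : (forall m, 0 <= f m <= 1) -> 0 <= rprod f n <= 1.
Proof. intros H. induction n; simpl. lra. specialize (H n). nra. Qed.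

Lemma rprod_mono f a d : (forall m, 0 <= f m <= 1) -> rprod f (a + d) <= rprod f a.
Proof. intros H. induction d. rewrite Nat.add_0_r; lra.
  rewrite Nat.add_succ_r. simpl. pose proof (rprod_bounds f (a + d) H). specialize (H (a + d)%nat). nra. Qed.

Lemma chain (f : nat -> R) (L : list nat) n : (forall m, 0 <= f m <= 1) -> decr L n -> rprod f n <= lprod (map f L).
Proof. intros H. revert n. induction L as [|m L IH]; intros n Hd; simpl.
  - apply rprod_bounds; auto.
  - destruct Hd as [Hm Hd]. replace n with (S m + (n - S m))%nat by lia.
    eapply Rle_trans. apply rprod_mono; auto. simpl.
    specialize (IH m Hd). pose proof (H m). pose proof (rprod_bounds f m H). nra. Qed.

Lemma lprod_sq (f : nat -> R) (L : list nat) (B : list R) : Forall2 (fun m b => 0 <= f m /\ f m ^ 2 <= b) L B ->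
  0 <= lprod (map f L) /\ lprod (map f L) ^ 2 <= lprod B.
Proof. unfold lprod. induction 1; cbn [map fold_right]. lra. destruct H as [H1 H2]. destruct IHForall2 as [H3 H4].
  split. nra. replace ((f x * fold_right Rmult 1 (map f l)) ^ 2) with
    (f x ^ 2 * (fold_right Rmult 1 (map f l)) ^ 2) by ring.
  apply (Rmult_le_compat (f x ^ 2) y (fold_right Rmult 1 (map f l) ^ 2) (fold_right Rmult 1 l')); nra. Qed.

Lemma hit_aux q lo hi N : 0 < q < 1 -> 0 < lo -> lo <= q * hi -> hi <= 1 -> q ^ (S N) <= hi ->
  exists m, lo <= q ^ (S m) <= hi.
Proof. intros Hq Hlo Hl Hh. induction N; intros HN.
  - exists O. simpl in *. nra.
  - destruct (Rle_or_lt (q ^ S N) hi) as [h|h]. apply IHN; auto.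
    exists (S N). split; auto. change (q ^ S (S N)) with (q * q ^ S N). nra. Qed.

Lemma hit q lo hi : 0 < q < 1 -> 0 < lo -> lo <= q * hi -> hi <= 1 ->
  exists m, lo <= q ^ (S m) <= hi.
Proof. intros Hq Hlo Hl Hh.
  assert (Hhi : 0 < hi) by nra.
  destruct (pow_lt_1_zero q ltac:(rewrite Rabs_pos_eq; lra) hi Hhi) as [N HN].
  specialize (HN (S N) ltac:(lia)). rewrite Rabs_pos_eq in HN by (apply pow_le; lra).
  apply (hit_aux q lo hi N); auto; lra. Qed.

Lemma hit_order q m1 m2 lo1 hi2 : 0 <= q <= 1 -> lo1 <= q ^ (S m1) -> q ^ (S m2) <= hi2 -> hi2 < lo1 ->
  (m1 < m2)%nat.
Proof. intros Hq H1 H2 H3. destruct (Nat.lt_ge_cases m1 m2) as [h|h]; auto. exfalso.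
  pose proof (pow_le_mono q (S m2) (m1 - m2) Hq). replace (S m2 + (m1 - m2))%nat with (S m1) in H by lia.
  lra. Qed.
Lemma fac01 q phi m : 0 <= q < 1 -> cos phi <= -7/10 -> 0 <= fac q (arc_pt phi) m <= 1.
Proof. intros Hq Hc. destruct (fac_bounds q phi m Hq Hc) as [H1 H2].
  assert (Ht : 0 <= q ^ S m < 1) by (apply pow_lt_1_compat; [lra|lia]).
  pose proof (g_le1 (q ^ S m) ltac:(lra)). split; auto. nra. Qed.

Lemma fac_hit q phi m lo hi M : 0 <= q < 1 -> cos phi <= -7/10 -> lo <= q ^ (S m) <= hi ->
  0 <= lo -> hi <= 1 -> pp lo <= M -> pp hi <= M ->
  0 <= fac q (arc_pt phi) m /\ fac q (arc_pt phi) m ^ 2 <= (1 - lo) ^ 2 * M.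
Proof. intros Hq Hc Hh H0 H1 Hl Hm. destruct (fac_bounds q phi m Hq Hc) as [B1 B2].
  split; auto. eapply Rle_trans. apply B2. apply g_band with hi; auto. Qed.

Lemma band_hit qa qb q m lo hi : qa <= q <= qb -> 0 <= qa -> lo <= qa ^ (S m) -> qb ^ (S m) <= hi ->
  lo <= q ^ (S m) <= hi.
Proof. intros Hq H0 H1 H2. pose proof (pow_incr qa q (S m) ltac:(lra)).
  pose proof (pow_incr q qb (S m) ltac:(lra)). lra. Qed.

Lemma finish (f : nat -> R) (L : list nat) (B : list R) N :
  (forall m, 0 <= f m <= 1) -> decr L N -> Forall2 (fun m b => 0 <= f m /\ f m ^ 2 <= b) L B ->
  lprod B < 1/36 -> rprod f N < 1/6.
Proof. intros Hf Hd HF HB. pose proof (chain f L N Hf Hd).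
  destruct (lprod_sq f L B HF) as [H1 H2]. nra. Qed.
Lemma case1 q phi : (1/2) <= q <= (11/20) -> cos phi <= -7/10 ->
  exists N, rprod (fac q (arc_pt phi)) N < 1/6.
Proof. intros Hq Hc.
  assert (F0 : 0 <= fac q (arc_pt phi) 0 /\ fac q (arc_pt phi) 0 ^ 2 <= (1 - (1/2)) ^ 2 * (113/80)).
  { apply (fac_hit q phi 0 (1/2) (11/20) (113/80)); try lra;
    try (apply (band_hit (1/2) (11/20)); lra); unfold pp; lra. }
  assert (F1 : 0 <= fac q (arc_pt phi) 1 /\ fac q (arc_pt phi) 1 ^ 2 <= (1 - (1/4)) ^ 2 * (5537/10000)).
  { apply (fac_hit q phi 1 (1/4) (303/1000) (5537/10000)); try lra;
    try (apply (band_hit (1/2) (11/20)); lra); unfold pp; lra. }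
  assert (F2 : 0 <= fac q (arc_pt phi) 2 /\ fac q (arc_pt phi) 2 ^ 2 <= (1 - (1/8)) ^ 2 * (6157/10000)).
  { apply (fac_hit q phi 2 (1/8) (167/1000) (6157/10000)); try lra;
    try (apply (band_hit (1/2) (11/20)); lra); unfold pp; lra. }
  assert (F3 : 0 <= fac q (arc_pt phi) 3 /\ fac q (arc_pt phi) 3 ^ 2 <= (1 - (31/500)) ^ 2 * (3871/5000)).
  { apply (fac_hit q phi 3 (31/500) (23/250) (3871/5000)); try lra;
    try (apply (band_hit (1/2) (11/20)); lra); unfold pp; lra. }
  assert (F4 : 0 <= fac q (arc_pt phi) 4 /\ fac q (arc_pt phi) 4 ^ 2 <= (1 - (31/1000)) ^ 2 * (1757/2000)).
  { apply (fac_hit q phi 4 (31/1000) (51/1000) (1757/2000)); try lra;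
    try (apply (band_hit (1/2) (11/20)); lra); unfold pp; lra. }
  assert (F5 : 0 <= fac q (arc_pt phi) 5 /\ fac q (arc_pt phi) 5 ^ 2 <= (1 - (3/200)) ^ 2 * (9391/10000)).
  { apply (fac_hit q phi 5 (3/200) (7/250) (9391/10000)); try lra;
    try (apply (band_hit (1/2) (11/20)); lra); unfold pp; lra. }
  assert (F6 : 0 <= fac q (arc_pt phi) 6 /\ fac q (arc_pt phi) 6 ^ 2 <= (1 - (7/1000)) ^ 2 * (9711/10000)).
  { apply (fac_hit q phi 6 (7/1000) (2/125) (9711/10000)); try lra;
    try (apply (band_hit (1/2) (11/20)); lra); unfold pp; lra. }
  exists 7%nat. apply (finish _ [6%nat;5%nat;4%nat;3%nat;2%nat;1%nat;0%nat] [(1 - (7/1000)) ^ 2 * (9711/10000);(1 - (3/200)) ^ 2 * (9391/10000);(1 - (31/1000)) ^ 2 * (1757/2000);(1 - (31/500)) ^ 2 * (3871/5000);(1 - (1/8)) ^ 2 * (6157/10000);(1 - (1/4)) ^ 2 * (5537/10000);(1 - (1/2)) ^ 2 * (113/80)]).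
  intros; apply fac01; lra. simpl; repeat split; lia.
  repeat (apply Forall2_cons; [tauto|]); apply Forall2_nil.
  unfold lprod; simpl; lra.
Qed.
Lemma case2 q phi : (11/20) <= q <= (3/5) -> cos phi <= -7/10 ->
  exists N, rprod (fac q (arc_pt phi)) N < 1/6.
Proof. intros Hq Hc.
  assert (F0 : 0 <= fac q (arc_pt phi) 0 /\ fac q (arc_pt phi) 0 ^ 2 <= (1 - (11/20)) ^ 2 * (43/25)).
  { apply (fac_hit q phi 0 (11/20) (3/5) (43/25)); try lra;
    try (apply (band_hit (11/20) (3/5)); lra); unfold pp; lra. }
  assert (F1 : 0 <= fac q (arc_pt phi) 1 /\ fac q (arc_pt phi) 1 ^ 2 <= (1 - (151/500)) ^ 2 * (409/625)).
  { apply (fac_hit q phi 1 (151/500) (9/25) (409/625)); try lra;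
    try (apply (band_hit (11/20) (3/5)); lra); unfold pp; lra. }
  assert (F2 : 0 <= fac q (arc_pt phi) 2 /\ fac q (arc_pt phi) 2 ^ 2 <= (1 - (83/500)) ^ 2 * (5509/10000)).
  { apply (fac_hit q phi 2 (83/500) (27/125) (5509/10000)); try lra;
    try (apply (band_hit (11/20) (3/5)); lra); unfold pp; lra. }
  assert (F3 : 0 <= fac q (arc_pt phi) 3 /\ fac q (arc_pt phi) 3 ^ 2 <= (1 - (91/1000)) ^ 2 * (1731/2500)).
  { apply (fac_hit q phi 3 (91/1000) (13/100) (1731/2500)); try lra;
    try (apply (band_hit (11/20) (3/5)); lra); unfold pp; lra. }
  assert (F4 : 0 <= fac q (arc_pt phi) 4 /\ fac q (arc_pt phi) 4 ^ 2 <= (1 - (1/20)) ^ 2 * (13/16)).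
  { apply (fac_hit q phi 4 (1/20) (39/500) (13/16)); try lra;
    try (apply (band_hit (11/20) (3/5)); lra); unfold pp; lra. }
  assert (F5 : 0 <= fac q (arc_pt phi) 5 /\ fac q (arc_pt phi) 5 ^ 2 <= (1 - (27/1000)) ^ 2 * (2233/2500)).
  { apply (fac_hit q phi 5 (27/1000) (47/1000) (2233/2500)); try lra;
    try (apply (band_hit (11/20) (3/5)); lra); unfold pp; lra. }
  exists 6%nat. apply (finish _ [5%nat;4%nat;3%nat;2%nat;1%nat;0%nat] [(1 - (27/1000)) ^ 2 * (2233/2500);(1 - (1/20)) ^ 2 * (13/16);(1 - (91/1000)) ^ 2 * (1731/2500);(1 - (83/500)) ^ 2 * (5509/10000);(1 - (151/500)) ^ 2 * (409/625);(1 - (11/20)) ^ 2 * (43/25)]).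
  intros; apply fac01; lra. simpl; repeat split; lia.
  repeat (apply Forall2_cons; [tauto|]); apply Forall2_nil.
  unfold lprod; simpl; lra.
Qed.
Lemma case3 q phi : (3/5) <= q <= (13/20) -> cos phi <= -7/10 ->
  exists N, rprod (fac q (arc_pt phi)) N < 1/6.
Proof. intros Hq Hc.
  assert (F0 : 0 <= fac q (arc_pt phi) 0 /\ fac q (arc_pt phi) 0 ^ 2 <= (1 - (3/5)) ^ 2 * (829/400)).
  { apply (fac_hit q phi 0 (3/5) (13/20) (829/400)); try lra;
    try (apply (band_hit (3/5) (13/20)); lra); unfold pp; lra. }
  assert (F1 : 0 <= fac q (arc_pt phi) 1 /\ fac q (arc_pt phi) 1 ^ 2 <= (1 - (9/25)) ^ 2 * (4169/5000)).
  { apply (fac_hit q phi 1 (9/25) (423/1000) (4169/5000)); try lra;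
    try (apply (band_hit (3/5) (13/20)); lra); unfold pp; lra. }
  assert (F2 : 0 <= fac q (arc_pt phi) 2 /\ fac q (arc_pt phi) 2 ^ 2 <= (1 - (27/125)) ^ 2 * (5257/10000)).
  { apply (fac_hit q phi 2 (27/125) (11/40) (5257/10000)); try lra;
    try (apply (band_hit (3/5) (13/20)); lra); unfold pp; lra. }
  assert (F3 : 0 <= fac q (arc_pt phi) 3 /\ fac q (arc_pt phi) 3 ^ 2 <= (1 - (129/1000)) ^ 2 * (76/125)).
  { apply (fac_hit q phi 3 (129/1000) (179/1000) (76/125)); try lra;
    try (apply (band_hit (3/5) (13/20)); lra); unfold pp; lra. }
  assert (F4 : 0 <= fac q (arc_pt phi) 4 /\ fac q (arc_pt phi) 4 ^ 2 <= (1 - (77/1000)) ^ 2 * (73/100)).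
  { apply (fac_hit q phi 4 (77/1000) (117/1000) (73/100)); try lra;
    try (apply (band_hit (3/5) (13/20)); lra); unfold pp; lra. }
  exists 5%nat. apply (finish _ [4%nat;3%nat;2%nat;1%nat;0%nat] [(1 - (77/1000)) ^ 2 * (73/100);(1 - (129/1000)) ^ 2 * (76/125);(1 - (27/125)) ^ 2 * (5257/10000);(1 - (9/25)) ^ 2 * (4169/5000);(1 - (3/5)) ^ 2 * (829/400)]).
  intros; apply fac01; lra. simpl; repeat split; lia.
  repeat (apply Forall2_cons; [tauto|]); apply Forall2_nil.
  unfold lprod; simpl; lra.
Qed.
Lemma case4 q phi : (13/20) <= q < 1 -> cos phi <= -7/10 ->
  exists N, rprod (fac q (arc_pt phi)) N < 1/6.
Proof. intros Hq Hc.
  destruct (hit q (643/1000) (99/100)) as [m0 H0]; try lra.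
  destruct (hit q (417/1000) (321/500)) as [m1 H1]; try lra.
  destruct (hit q (27/100) (52/125)) as [m2 H2]; try lra.
  destruct (hit q (87/500) (269/1000)) as [m3 H3]; try lra.
  destruct (hit q (14/125) (173/1000)) as [m4 H4]; try lra.
  destruct (hit q (9/125) (111/1000)) as [m5 H5]; try lra.
  destruct (hit q (23/500) (71/1000)) as [m6 H6]; try lra.
  assert (O0 : (m0 < m1)%nat) by (apply (hit_order q m0 m1 (643/1000) (321/500)); lra).
  assert (O1 : (m1 < m2)%nat) by (apply (hit_order q m1 m2 (417/1000) (52/125)); lra).
  assert (O2 : (m2 < m3)%nat) by (apply (hit_order q m2 m3 (27/100) (269/1000)); lra).
  assert (O3 : (m3 < m4)%nat) by (apply (hit_order q m3 m4 (87/500) (173/1000)); lra).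
  assert (O4 : (m4 < m5)%nat) by (apply (hit_order q m4 m5 (14/125) (111/1000)); lra).
  assert (O5 : (m5 < m6)%nat) by (apply (hit_order q m5 m6 (9/125) (71/1000)); lra).
  assert (F0 : 0 <= fac q (arc_pt phi) m0 /\ fac q (arc_pt phi) m0 ^ 2 <= (1 - (643/1000)) ^ 2 * (56629/10000)).
  { apply (fac_hit q phi m0 (643/1000) (99/100) (56629/10000)); try lra; unfold pp; lra. }
  assert (F1 : 0 <= fac q (arc_pt phi) m1 /\ fac q (arc_pt phi) m1 ^ 2 <= (1 - (417/1000)) ^ 2 * (20131/10000)).
  { apply (fac_hit q phi m1 (417/1000) (321/500) (20131/10000)); try lra; unfold pp; lra. }
  assert (F2 : 0 <= fac q (arc_pt phi) m2 /\ fac q (arc_pt phi) m2 ^ 2 <= (1 - (27/100)) ^ 2 * (1013/1250)).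
  { apply (fac_hit q phi m2 (27/100) (52/125) (1013/1250)); try lra; unfold pp; lra. }
  assert (F3 : 0 <= fac q (arc_pt phi) m3 /\ fac q (arc_pt phi) m3 ^ 2 <= (1 - (87/500)) ^ 2 * (5417/10000)).
  { apply (fac_hit q phi m3 (87/500) (269/1000) (5417/10000)); try lra; unfold pp; lra. }
  assert (F4 : 0 <= fac q (arc_pt phi) m4 /\ fac q (arc_pt phi) m4 ^ 2 <= (1 - (14/125)) ^ 2 * (257/400)).
  { apply (fac_hit q phi m4 (14/125) (173/1000) (257/400)); try lra; unfold pp; lra. }
  assert (F5 : 0 <= fac q (arc_pt phi) m5 /\ fac q (arc_pt phi) m5 ^ 2 <= (1 - (9/125)) ^ 2 * (7443/10000)).
  { apply (fac_hit q phi m5 (9/125) (111/1000) (7443/10000)); try lra; unfold pp; lra. }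
  assert (F6 : 0 <= fac q (arc_pt phi) m6 /\ fac q (arc_pt phi) m6 ^ 2 <= (1 - (23/500)) ^ 2 * (8259/10000)).
  { apply (fac_hit q phi m6 (23/500) (71/1000) (8259/10000)); try lra; unfold pp; lra. }
  exists (S m6). apply (finish _ [m6;m5;m4;m3;m2;m1;m0] [(1 - (23/500)) ^ 2 * (8259/10000);(1 - (9/125)) ^ 2 * (7443/10000);(1 - (14/125)) ^ 2 * (257/400);(1 - (87/500)) ^ 2 * (5417/10000);(1 - (27/100)) ^ 2 * (1013/1250);(1 - (417/1000)) ^ 2 * (20131/10000);(1 - (643/1000)) ^ 2 * (56629/10000)]).
  intros; apply fac01; lra. simpl; repeat split; lia.
  repeat (apply Forall2_cons; [tauto|]); apply Forall2_nil.
  unfold lprod; simpl; lra.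
Qed.
Lemma cos_bound phi : 3 * PI / 4 <= phi <= PI -> cos phi <= -7/10.
Proof. intros H. pose proof PI_RGT_0.
  assert (Hs : sqrt 2 <= 10/7).
  { rewrite <- (sqrt_square (10/7)) by lra. apply sqrt_le_1_alt. lra. }
  assert (Hs0 : 0 < sqrt 2) by (apply sqrt_lt_R0; lra).
  assert (Hc : cos phi <= cos (3 * (PI / 4))).
  { destruct (Req_dec phi (3 * (PI / 4))) as [E|E]. rewrite E; lra.
    left. apply cos_decreasing_1; lra. }
  rewrite cos_3PI4 in Hc.
  assert (-1 / sqrt 2 <= -7/10).
  { assert (Hi : / (10/7) <= / sqrt 2) by (apply Rinv_le_contravar; lra).
    replace (/ (10/7)) with (7/10) in Hi by field. unfold Rdiv. lra. }
  lra. Qed.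

Lemma prod_small q phi : 1/2 <= q < 1 -> cos phi <= -7/10 ->
  exists N, rprod (fac q (arc_pt phi)) N < 1/6.
Proof. intros Hq Hc.
  destruct (Rle_or_lt q (11/20)). apply case1; lra.
  destruct (Rle_or_lt q (3/5)). apply case2; lra.
  destruct (Rle_or_lt q (13/20)). apply case3; lra.
  apply case4; lra. Qed.

Lemma Cmod_A_le q x j : 0 < q < 1 -> Cmod x = 3 -> Cmod (Afun q x j) <= q ^ (tt j) * (3 * q) ^ j.
Proof. intros Hq Hx. rewrite Cmod_A by (auto; lra). rewrite qtri_tt, pow_add, Rpow_mult_distr. right; ring. Qed.

Lemma Cmod_B_le q x l : 0 < q < 1 -> Cmod x = 3 -> Cmod (Bfun q x l) <= (/ 3) ^ (S l).
Proof. intros Hq Hx. rewrite Cmod_B by (auto; lra).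
  assert (qtri q l <= 1) by (unfold qtri; apply pow_le1; lra).
  assert (0 <= (/ 3) ^ S l) by (apply pow_le; lra). nra. Qed.

Lemma G_lower q phi : 1/2 <= q < 1 -> 1/6 <= Cmod (Gfun q (arc_pt phi)).
Proof. intros Hq. set (x := arc_pt phi). assert (Hx : Cmod x = 3) by apply Cmod_arc.
  assert (HB : exC (Bfun q x)).
  { apply exC_le with (fun l => (/ 3) ^ l). intros l. eapply Rle_trans. apply Cmod_B_le; auto; lra.
    change ((/ 3) ^ S l) with (/ 3 * (/ 3) ^ l). assert (0 <= (/ 3) ^ l) by (apply pow_le; lra). nra.
    apply ex_series_geom. rewrite Rabs_pos_eq; lra. }
  change (Gfun q x) with (CSeries (Bfun q x)).
  rewrite (CSeries_first _ HB).
  assert (Ht : Cmod (CSeries (fun k => Bfun q x (S k))) <= 1/6).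
  { apply cseries_le. apply exC_shift; auto. intros N.
    eapply Rle_trans. apply Cmod_csum.
    apply Rle_trans with (rsum (fun l => / 9 * (/ 3) ^ l) N).
    apply rsum_le. intros i Hi. eapply Rle_trans. apply Cmod_B_le; auto; lra.
    right. simpl. field.
    rewrite rsum_scal, rsum_geom by lra.
    assert (0 <= (/ 3) ^ N) by (apply pow_le; lra).
    apply Rle_trans with (/ 9 * (1 / (1 - / 3))).
    apply Rmult_le_compat_l. lra. unfold Rdiv. apply Rmult_le_compat_r.
    apply Rlt_le, Rinv_0_lt_compat; lra. lra. lra. }
  assert (H0 : Cmod (Bfun q x 0) = 1/3).
  { rewrite Cmod_B by (auto; lra). unfold qtri. simpl. field. }
  pose proof (Cmod_triangle (Cplus (Bfun q x 0) (CSeries (fun k => Bfun q x (S k))))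
                            (Copp (CSeries (fun k => Bfun q x (S k))))).
  replace (Cplus (Cplus (Bfun q x 0) (CSeries (fun k => Bfun q x (S k))))
                 (Copp (CSeries (fun k => Bfun q x (S k))))) with (Bfun q x 0) in H by cring.
  rewrite Cmod_opp in H. lra. Qed.

Lemma TS_upper q phi : 1/2 <= q < 1 -> 3 * PI / 4 <= phi <= PI ->
  Cmod (ThetaStar q (arc_pt phi)) < 1/6.
Proof. intros Hq Hphi. set (x := arc_pt phi). assert (Hx : Cmod x = 3) by apply Cmod_arc.
  assert (Hc : cos phi <= -7/10) by (apply cos_bound; auto).
  assert (Hq' : 0 < q < 1) by lra.
  assert (HA : exC (Afun q x)).
  { apply exC_le with (fun j => q ^ (tt j) * (3 * q) ^ j). intros; apply Cmod_A_le; auto.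
    apply gamma_series; lra. }
  assert (HB : exC (Bfun q x)).
  { apply exC_le with (fun l => (/ 3) ^ l). intros l. eapply Rle_trans. apply Cmod_B_le; auto.
    change ((/ 3) ^ S l) with (/ 3 * (/ 3) ^ l). assert (0 <= (/ 3) ^ l) by (apply pow_le; lra). nra.
    apply ex_series_geom. rewrite Rabs_pos_eq; lra. }
  destruct (prod_small q phi Hq Hc) as [N1 HN1]. fold x in HN1.
  set (f := fac q x) in *.
  assert (Hf : forall m, 0 <= f m <= 1) by (intros; apply fac01; auto; lra).
  set (P := rprod f N1) in *.
  set (d := 1/6 - P).
  assert (Hd : 0 < d) by (unfold d; lra).
  destruct (cseries_conv _ HA (d / 4)) as [NA HNA]. lra.
  destruct (cseries_conv _ HB (d / 4)) as [NB HNB]. lra.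
  pose proof (gamma_series q 3 Hq' ltac:(lra)) as Hg.
  set (SG := Series (fun j => q ^ tt j * 3 ^ j)).
  assert (HSG : forall N, rsum (fun j => q ^ tt j * 3 ^ j) N <= SG).
  { intros N. apply rsum_le_series; auto. intros; apply Rmult_le_pos; apply pow_le; lra. }
  assert (HSG0 : 0 <= SG) by (pose proof (HSG O); simpl in *; lra).
  destruct (pow_lt_1_zero q ltac:(rewrite Rabs_pos_eq; lra) (d / 4 * (1 - q) / (SG + 1)))
    as [Nq HNq].
  { apply Rdiv_lt_0_compat; [|lra]. apply Rmult_lt_0_compat; lra. }
  set (k := (N1 + NA + NB + Nq)%nat).
  specialize (HNA (S k) ltac:(unfold k; lia)). specialize (HNB k ltac:(unfold k; lia)).
  specialize (HNq (S k) ltac:(unfold k; lia)). rewrite Rabs_pos_eq in HNq by (apply pow_le; lra).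
  pose proof (err_bound q x k Hq' Hx) as HE.
  assert (HE' : Cmod (Cminus (Tn q x (S k)) (Cplus (csum (Afun q x) (S (S k))) (csum (Bfun q x) (S k))))
               < d / 4).
  { eapply Rle_lt_trans. apply HE.
    assert (Hr : rsum (fun j => q ^ tt j * 3 ^ j) (S (S k)) + 1 <= SG + 1) by (specialize (HSG (S (S k))); lra).
    assert (0 <= q ^ S k) by (apply pow_le; lra).
    apply Rle_lt_trans with (q ^ S k / (1 - q) * (SG + 1)).
    apply Rmult_le_compat_l; auto. apply Rdiv_le_0_compat; lra.
    apply Rmult_lt_reg_r with ((1 - q) / (SG + 1)). apply Rdiv_lt_0_compat; lra.
    replace (q ^ S k / (1 - q) * (SG + 1) * ((1 - q) / (SG + 1))) with (q ^ S k) by (field; lra).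
    replace (d / 4 * ((1 - q) / (SG + 1))) with (d / 4 * (1 - q) / (SG + 1)) by (field; lra). lra. }
  assert (HT : Cmod (Tn q x (S k)) <= P).
  { rewrite Tn_mod by lra. unfold P. replace (S k) with (N1 + (S k - N1))%nat by (unfold k; lia).
    apply rprod_mono; auto. }
  unfold ThetaStar. change (theta q x) with (CSeries (Afun q x)). change (Gfun q x) with (CSeries (Bfun q x)).
  set (sA := csum (Afun q x) (S (S k))) in *. set (sB := csum (Bfun q x) (S k)) in *.
  replace (Cplus (CSeries (Afun q x)) (CSeries (Bfun q x))) with
    (Cplus (Cplus (Cminus (CSeries (Afun q x)) sA) (Cminus (CSeries (Bfun q x)) sB))
           (Cplus (Copp (Cminus (Tn q x (S k)) (Cplus sA sB))) (Tn q x (S k)))) by cring.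
  eapply Rle_lt_trans. apply Cmod_triangle.
  pose proof (Cmod_triangle (Cminus (CSeries (Afun q x)) sA) (Cminus (CSeries (Bfun q x)) sB)).
  pose proof (Cmod_triangle (Copp (Cminus (Tn q x (S k)) (Cplus sA sB))) (Tn q x (S k))).
  rewrite Cmod_opp in H0. unfold d in *. lra. Qed.

Theorem lemma5 (q phi : R) :
  1/2 <= q < 1 -> 3 * PI / 4 <= phi <= PI ->
  Cmod (Gfun q (arc_pt phi)) > Cmod (ThetaStar q (arc_pt phi)) /\
  Cmod (theta q (arc_pt phi)) > 0.
Proof. intros Hq Hphi. pose proof (G_lower q phi Hq). pose proof (TS_upper q phi Hq Hphi).
  split. lra.
  assert (E : theta q (arc_pt phi) = Cminus (ThetaStar q (arc_pt phi)) (Gfun q (arc_pt phi))).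
  { unfold ThetaStar. cring. }
  rewrite E. pose proof (Cmod_triangle (Cminus (ThetaStar q (arc_pt phi)) (Gfun q (arc_pt phi)))
                                       (Copp (ThetaStar q (arc_pt phi)))).
  replace (Cplus (Cminus (ThetaStar q (arc_pt phi)) (Gfun q (arc_pt phi))) (Copp (ThetaStar q (arc_pt phi))))
    with (Copp (Gfun q (arc_pt phi))) in H1 by cring.
  rewrite !Cmod_opp in H1. lra. Qed.
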